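(* Let $q\in\mathbb{C}$ with $0<|q|<1$ and $l,m,n,u\in\mathbb{N}$. Then \[ \sum_{k=0}^{n}\frac{q^{k^2+uk} (q)_{l+m+n-k}} {(q)_k (q)_{l-k}(q)_{m-k}(q)_{n-k} (q)_{u+k}} =\sum_{k=-n}^{n}\frac{(-1)^k q^{(3k^2-k)/2} (q)_{l+m}(q)_{m+n}(q)_{l+n}(q)_u} {(q)_{l-k}(q)_{m-k}(q)_{n-k}(q)_{u-k}(q)_{l+k}(q)_{m+k}(q)_{n+k}(q)_{u+k}}, \] and \[ \sum_{k=0}^{n}\frac{q^{k^2+(u+1)k} (q)_{l+m+n-k+1}} {(q)_k (q)_{l-k}(q)_{m-k}(q)_{n-k}(q)_{u+k+1}} =\sum_{k=-n-1}^{n}\frac{(-1)^k q^{(3k^2+k)/2} (q)_{l+m+1}(q)_{m+n+1}(q)_{l+n+1}(q)_u} {(q)_{l-k}(q)_{m-k}(q)_{n-k}(q)_{u-k}(q)_{l+k+1}(q)_{m+k+1}(q)_{n+k+1}(q)_{u+k+1}}. \]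
   Context: $(q)_n=(q;q)_n=(1-q)(1-q^2)\cdots(1-q^n)$ for $n\ge0$ (with $(q)_0=1$), and $1/(q)_n=0$ for $n<0$. *)

(* Defs.v *)
From mathcomp Require Import all_boot all_order all_algebra.
From mathcomp Require Export complex.
From mathcomp Require Export reals.
Set Implicit Arguments. Unset Strict Implicit. Unset Printing Implicit Defensive.
Import Order.TTheory GRing.Theory Num.Theory.
Local Open Scope ring_scope.

Definition qpoch {R : comNzRingType} (q : R) (n : nat) : R :=
  \prod_(i < n) (1 - q ^+ i.+1).

(* 1/(q)_n for an integer n, with the convention 1/(q)_n = 0 for n < 0. *)
Definition qpinv {F : fieldType} (q : F) (n : int) : F :=
  match n with
  | Posz m => (qpoch q m)^-1
  | Negz _ => 0
  end.

(* Main.v *)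
Require Import Defs.
From mathcomp Require Import all_boot all_order all_algebra.
From mathcomp Require Import complex reals.
From mathcomp Require Import ring lra zify.
Import Order.TTheory GRing.Theory Num.Theory.
Local Open Scope ring_scope.
Set Implicit Arguments. Unset Strict Implicit. Unset Printing Implicit Defensive.

Section Basics.
Variable F : numFieldType.
Variable q : F.
Hypothesis hq0 : q != 0.
Hypothesis hq1 : `|q| < 1.

Lemma qpochS n : qpoch q n.+1 = qpoch q n * (1 - q ^+ n.+1).
Proof. by rewrite /qpoch big_ord_recr. Qed.

Lemma expn_neq1 n : (0 < n)%N -> q ^+ n != 1.
Proof.
move=> n0; apply/eqP => h.
have : `|q ^+ n| < 1 by rewrite normrX exprn_ilt1 // -?lt0n.
by rewrite h normr1 ltxx.
Qed.

Lemma one_sub_neq0 n : 1 - q ^+ n.+1 != 0.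
Proof. by rewrite subr_eq0 eq_sym expn_neq1. Qed.

Lemma qpoch_neq0 n : qpoch q n != 0.
Proof.
elim: n => [|n IH]; first by rewrite /qpoch big_ord0 oner_neq0.
by rewrite qpochS mulf_neq0 // one_sub_neq0.
Qed.

Notation I := (qpinv q).
Notation P := (qpoch q).

Lemma IP n : I n%:Z * P n = 1.
Proof. by rewrite /= mulVf // qpoch_neq0. Qed.

Lemma Ineg (a : int) : a < 0 -> I a = 0.
Proof. by case: a. Qed.

Lemma Ipred (a : int) : I (a - 1) = (1 - q ^ a) * I a.
Proof.
case: a => [[|n]|m].
- by rewrite /= expr0z subrr mul0r.
- have -> : (n.+1%:Z - 1 = n%:Z)%R by lia.
  rewrite /= qpochS invfM mulrCA mulfV ?mulr1 //.
  exact: one_sub_neq0.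
- have -> : (Negz m - 1 = Negz m.+1)%R by lia.
  by rewrite /= mulr0.
Qed.
End Basics.

Section Zsum.
Variable F : numFieldType.

Definition zs (N : nat) (f : int -> F) := \sum_(i < (2 * N).+1) f (i%:Z - N%:Z).

Lemma zs_shift N f : zs N (fun k => f (k + 1)) = zs N f - f (- N%:Z) + f (N%:Z + 1).
Proof.
rewrite /zs big_ord_recr big_ord_recl /=.
have -> : (0%:Z - N%:Z = - N%:Z)%R by lia.
have -> : ((2 * N)%:Z - N%:Z + 1 = N%:Z + 1)%R by lia.
set A := (X in X + _ = _).
set B := (X in _ = _ + X - _ + _).
have -> : A = B by apply: eq_bigr => i _; congr f; rewrite /bump /=; lia.
ring.
Qed.

Lemma zs_tele N (G : int -> F) : zs N (fun k => G (k + 1) - G k) = G (N%:Z + 1) - G (- N%:Z).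
Proof.
rewrite /zs sumrB -/(zs N (fun k => G (k + 1))) -/(zs N G) zs_shift.
rewrite -/(zs N G); ring.
Qed.

Lemma zs_nat N (a : int) K f : (- N%:Z <= a) -> (a + K%:Z <= N%:Z + 1) ->
  (forall k, f k != 0 -> (a <= k) && (k < a + K%:Z)) ->
  zs N f = \sum_(i < K) f (a + i%:Z).
Proof.
move=> h1 h2 hf.
have hs : (0 <= a + N%:Z) by lia.
pose s := absz (a + N%:Z).
have es : (s%:Z = a + N%:Z) by rewrite /s; lia.
have sK : (s + K <= (2 * N).+1)%N by lia.
rewrite /zs -(big_mkord xpredT (fun i : nat => f (i%:Z - N%:Z))).
rewrite (@big_cat_nat _ _ _ s) /=; [|lia|lia].
rewrite (@big_cat_nat _ _ _ (s + K) s) /=; [|lia|lia].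
rewrite big1_seq ?add0r; last first.
  move=> i /andP [_]; rewrite mem_iota => /andP [hi1 hi2].
  by apply/eqP; apply: contraT => /hf; lia.
rewrite [X in _ + X]big1_seq ?addr0; last first.
  move=> i /andP [_]; rewrite mem_iota => /andP [hi1 hi2].
  by apply/eqP; apply: contraT => /hf; lia.
rewrite -{1}[s]add0n big_addn addKn big_mkord; apply: eq_bigr => i _.
congr f; rewrite PoszD es; lia.
Qed.

Lemma zs_widen N d f : (forall k, f k != 0 -> (- N%:Z <= k) && (k <= N%:Z)) ->
  zs (N + d) f = zs N f.
Proof.
move=> hf.
rewrite (@zs_nat (N + d) (- N%:Z) (2 * N).+1); [| lia | lia | ].
- by rewrite /zs; apply: eq_bigr => i _; congr f; lia.
- by move=> k /hf; lia.
Qed.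

End Zsum.

Section U.
Variable F : numFieldType.
Variable q : F.
Hypothesis hq0 : q != 0.
Hypothesis hq1 : `|q| < 1.
Notation I := (qpinv q).
Notation P := (qpoch q).
Let Ipr := Ipred hq0 hq1.

Lemma qD (a b : int) : q ^ (a + b) = q ^ a * q ^ b.
Proof. exact: expfzDr. Qed.

Lemma Ieq (a b : int) : a = b -> I a = I b.
Proof. by move->. Qed.
Lemma qeq (a b : int) : a = b -> q ^ a = q ^ b.
Proof. by move->. Qed.

Lemma pascal (a b : int) :
  (1 - q ^ (a + b)) * I a * I b = I (a - 1) * I b + q ^ a * I a * I (b - 1).
Proof. rewrite !Ipr qD; ring. Qed.

Definition W (k : int) : F := (-1) ^ k * q ^ ((k * (k - 1)) %/ 2)%Z.

Lemma WS k : W (k + 1) = - (q ^ k) * W k.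
Proof.
rewrite /W.
have -> : ((k + 1) * (k + 1 - 1) = k * 2 + k * (k - 1))%R by ring.
rewrite divzMDl // qD expfzDr ?oppr_eq0 ?oner_eq0 // expr1z; ring.
Qed.

Lemma WP k : W k = - (q ^ (k - 1)) * W (k - 1).
Proof. by rewrite -WS subrK. Qed.

Definition T (a b : int) (k : int) := W k * I (a - k) * I (b + k).

Lemma Trec (a b : int) N : a <= N%:Z -> b <= N%:Z ->
  (1 - q ^ (a + b)) * zs N (T a b) = (1 - q ^ (a - 1)) * zs N (T (a - 1) b).
Proof.
move=> ha hb.
pose g k := W (k - 1) * I (a - k) * I (b + k - 1).
have hg : zs N g = zs N (T (a - 1) b).
  have := zs_shift N g.
  have -> : g (- N%:Z) = 0.
    by rewrite /g (@Ineg _ q (b + - N%:Z - 1)) ?mulr0 //; lia.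
  have -> : g (N%:Z + 1) = 0.
    by rewrite /g (@Ineg _ q (a - (N%:Z + 1))) ?mulr0 ?mul0r //; lia.
  rewrite subr0 addr0 => <-; apply: eq_bigr => i _.
  rewrite /g /T; rewrite addrK; congr (_ * I _ * I _); lia.
have ht : forall k, (1 - q ^ (a + b)) * T a b k = T (a - 1) b k - q ^ (a - 1) * g k.
  move=> k; rewrite /T /g.
  have e1 : q ^ (a - 1) = q ^ (a - k) * q ^ (k - 1) by rewrite -qD; apply: qeq; lia.
  have p := pascal (a - k) (b + k).
  rewrite (qeq (a := a - k + (b + k)) (b := a + b)) in p; last by lia.
  rewrite e1 (WP k).
  have -> : I (a - 1 - k) = I (a - k - 1) by apply: Ieq; lia.
  transitivity (- q ^ (k - 1) * W (k - 1) * ((1 - q ^ (a + b)) * I (a - k) * I (b + k))); first ring.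
  rewrite p; ring.
rewrite /zs mulr_sumr mulr_sumr.
under eq_bigr do rewrite ht.
rewrite sumrB.
have -> : \sum_(i < (2*N).+1) q ^ (a - 1) * g (i%:Z - N%:Z) = q^(a-1) * zs N g by rewrite /zs mulr_sumr.
rewrite hg /zs -mulr_sumr; ring.
Qed.

Lemma Inz (a : int) : I a != 0 -> 0 <= a.
Proof. by apply: contraR; rewrite -ltNge => /(@Ineg _ q) ->; rewrite eqxx. Qed.

Lemma osn (n : nat) : 1 - q ^ (Posz n.+1) != 0.
Proof. exact: one_sub_neq0. Qed.

Lemma W0 : W 0 = 1.
Proof. by rewrite /W mul0r div0z !expr0z mulr1. Qed.
Lemma Wm1 : W (-1) = - q.
Proof.
rewrite /W.
have -> : (((-1) * (-1 - 1)) %/ 2 = 1 :> int)%Z by [].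
by rewrite expr1z exprN1 invrN1 mulN1r.
Qed.
Lemma I0 : I 0 = 1.
Proof. by change (qpinv q (Posz 0) = 1); rewrite /qpinv /qpoch big_ord0 invr1. Qed.
Lemma I1 : I 1 = (1 - q)^-1.
Proof. by change (qpinv q (Posz 1) = (1 - q)^-1); rewrite /qpinv /qpoch big_ord1 expr1. Qed.

Lemma Tzero (a b N : nat) : (a + b < N)%N -> zs N (T a.+1%:Z b%:Z) = 0.
Proof.
elim: a => [|a IH] h.
- have := @Trec 1 b N.
  have -> : q ^ (1 - 1) = 1 by rewrite subrr.
  rewrite subrr mul0r => H.
  have {}H := H ltac:(lia) ltac:(lia).
  move/eqP: H; rewrite mulf_eq0 => /orP [|/eqP //].
  have -> : (1 + b%:Z = Posz b.+1)%R by lia.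
  by rewrite (negbTE (osn _)).
- have := @Trec a.+2 b N.
  have -> : (a.+2%:Z - 1 = a.+1%:Z)%R by lia.
  rewrite IH ?mulr0; last by lia.
  move=> H; have {}H := H ltac:(lia) ltac:(lia).
  move/eqP: H; rewrite mulf_eq0 => /orP [|/eqP //].
  have -> : (a.+2%:Z + b%:Z = Posz (a.+1 + b).+1)%R by lia.
  by rewrite (negbTE (osn _)).
Qed.

Lemma T0 (e N : nat) : (e <= 1)%N -> (e < N)%N -> zs N (T 0 e%:Z) = 1.
Proof.
move=> he hN.
rewrite (@zs_nat _ N (- e%:Z) e.+1); [| lia | lia |].
- case: e he {hN} => [|[|//]] _.
  + rewrite big_ord1 /T.
    have -> : (- 0%:Z + 0%:Z = 0 :> int)%R by [].
    by rewrite W0 I0 !mulr1.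
  + rewrite big_ord_recr big_ord1 /T.
    have -> : (- 1%:Z + (widen_ord (leqnSn 1) ord0 : nat)%:Z = -1 :> int)%R by [].
    have -> : (- 1%:Z + (@ord_max 1 : nat)%:Z = 0 :> int)%R by [].
    have -> : (0 - -1 = 1 :> int)%R by [].
    have -> : (1%:Z + -1 = 0 :> int)%R by [].
    have -> : (0 - 0 = 0 :> int)%R by [].
    have -> : (1%:Z + 0 = 1 :> int)%R by [].
    rewrite W0 Wm1 I0 I1.
    have h : 1 - q != 0 by rewrite (osn 0).
    rewrite /=; by field.
- move=> k; rewrite /T => /eqP hk.
  have h1 : I (0 - k) != 0 by apply/eqP => h; apply: hk; rewrite h mulr0 mul0r.
  have h2 : I (e%:Z + k) != 0 by apply/eqP => h; apply: hk; rewrite h mulr0.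
  move/Inz: h1; move/Inz: h2; lia.
Qed.

Lemma Ulem (j e N : nat) : (e <= 1)%N -> (2 * j + e < N)%N ->
  zs N (T j%:Z (j + e)%:Z) = (j == 0)%:R.
Proof.
case: j => [|j] he hN.
- by rewrite T0.
- rewrite Tzero //; lia.
Qed.
End U.

Section V.
Variable F : numFieldType.
Variable q : F.
Hypothesis hq0 : q != 0.
Hypothesis hq1 : `|q| < 1.
Notation I := (qpinv q).
Notation P := (qpoch q).
Let Ipr := Ipred hq0 hq1.
Let qD := qD hq0.
Local Unset Implicit Arguments.
Let qe (a b : int) (h : a = b) := @qeq F q a b h.
Let Ie (a b : int) (h : a = b) := @Ieq F q a b h.
Local Set Implicit Arguments.

Lemma pascal2 (a b : int) :
  (1 - q ^ (a + b)) * I a * I b = q ^ b * I (a - 1) * I b + I a * I (b - 1).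
Proof. rewrite !Ipr qD; ring. Qed.

Definition vt (u : nat) (n c : int) (i : nat) :=
  q ^ ((n - i%:Z) * (u%:Z - i%:Z)) * I (u%:Z - i%:Z) * I (n - i%:Z) * I i%:Z * I (c + i%:Z).
Definition vsum (u : nat) (n c : int) := \sum_(i < u.+1) vt u n c i.

Lemma vrec (u : nat) (n c : int) :
  (1 - q ^ (u.+1%:Z)) * vsum u.+1 n c = q ^ n * vsum u n c + vsum u (n - 1) (c + 1).
Proof.
have ht : forall i : nat, (1 - q ^ (u.+1%:Z)) * vt u.+1 n c i =
   q ^ n * (q ^ ((n - i%:Z) * (u%:Z - i%:Z)) * I (u%:Z - i%:Z) * I (n - i%:Z) * I i%:Z * I (c + i%:Z))
   + q ^ ((n - i%:Z) * (u.+1%:Z - i%:Z)) * I (u.+1%:Z - i%:Z) * I (n - i%:Z) * I (i%:Z - 1) * I (c + i%:Z).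
  move=> i; rewrite /vt.
  have p := pascal2 (u.+1%:Z - i%:Z) i%:Z.
  rewrite (qe (u.+1%:Z - i%:Z + i%:Z) (u.+1%:Z)) in p; last by lia.
  rewrite (Ie (u.+1%:Z - i%:Z - 1) (u%:Z - i%:Z)) in p; last by lia.
  have e1 : q ^ n * q ^ ((n - i%:Z) * (u%:Z - i%:Z)) = q ^ ((n - i%:Z) * (u.+1%:Z - i%:Z)) * q ^ i%:Z.
    by rewrite -!qD; apply: qe; ring.
  transitivity (q ^ ((n - i%:Z) * (u.+1%:Z - i%:Z)) * I (n - i%:Z) * I (c + i%:Z) *
     ((1 - q ^ u.+1%:Z) * I (u.+1%:Z - i%:Z) * I i%:Z)); first ring.
  rewrite p.
  transitivity (q ^ n * q ^ ((n - i%:Z) * (u%:Z - i%:Z)) * I (u%:Z - i%:Z) * I (n - i%:Z) * I i%:Z * I (c + i%:Z)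
   + q ^ ((n - i%:Z) * (u.+1%:Z - i%:Z)) * I (u.+1%:Z - i%:Z) * I (n - i%:Z) * I (i%:Z - 1) * I (c + i%:Z)); last ring.
  rewrite e1; ring.
rewrite /vsum mulr_sumr; under eq_bigr do rewrite ht.
rewrite big_split /= -mulr_sumr.
congr (_ * _ + _).
- rewrite big_ord_recr /= (@Ineg _ q (u%:Z - u.+1%:Z)) ?mulr0 ?mul0r ?addr0; last by lia.
  by apply: eq_bigr => i _.
- rewrite big_ord_recl.
  rewrite [X in X + _](_ : _ = 0) ?add0r; last first.
    by rewrite (@Ineg _ q (-1)) ?mulr0 ?mul0r.
  apply: eq_bigr => i _; rewrite /vt lift0.
  rewrite (qe ((n - i.+1%:Z) * (u.+1%:Z - i.+1%:Z)) ((n - 1 - i%:Z) * (u%:Z - i%:Z))); last by lia.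
  rewrite (Ie (u.+1%:Z - i.+1%:Z) (u%:Z - i%:Z)); last by lia.
  rewrite (Ie (n - i.+1%:Z) (n - 1 - i%:Z)); last by lia.
  rewrite (Ie (i.+1%:Z - 1) (i%:Z)); last by lia.
  rewrite (Ie (c + i.+1%:Z) (c + 1 + i%:Z)); last by lia.
  by [].
Qed.

Lemma Ipn (k : nat) : I k%:Z = (1 - q ^+ k.+1) * I k.+1%:Z.
Proof. by rewrite (Ie k%:Z (k.+1%:Z - 1)) ?Ipr //; lia. Qed.

Lemma vsum_neg u c : vsum u (-1) c = 0.
Proof.
rewrite /vsum big1 // => i _; rewrite /vt (@Ineg _ q (-1 - i%:Z)) ?mulr0 ?mul0r //; lia.
Qed.

Lemma Vthm (u n c : nat) :
  vsum u n%:Z c%:Z = I u%:Z * I (u + c)%N%:Z * I n%:Z * I (n + c)%N%:Z * P (u + n + c).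
Proof.
elim: u n c => [|u IH] n c.
- rewrite /vsum big_ord1 /vt /=.
  have -> : ((n%:Z - 0) * (0 - 0) = 0 :> int)%R by lia.
  have P0 : P 0 = 1 by rewrite /qpoch big_ord0.
  rewrite !addn0 !add0n expr0z P0.
  have h1 := qpoch_neq0 hq1 (n + c); have h2 := qpoch_neq0 hq1 n; have h3 := qpoch_neq0 hq1 c.
  by field; rewrite h1 h2 h3.
- apply: (mulfI (osn hq1 u)); rewrite vrec.
  case: n => [|n].
  + rewrite sub0r vsum_neg addr0 IH expr0z mul1r.
    rewrite !addn0 (Ipn u) (Ipn (u + c)).
    have -> : (u.+1 + c = (u + c).+1)%N by lia.
    rewrite qpochS I0 -exprnP; ring.
  + have -> : (n.+1%:Z - 1 = n%:Z)%R by lia.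
    have -> : (c%:Z + 1 = c.+1%:Z)%R by lia.
    rewrite !IH.
    have -> : (u + c.+1 = (u + c).+1)%N by lia.
    have -> : (n + c.+1 = n.+1 + c)%N by lia.
    have -> : (u + n + c.+1 = u + n.+1 + c)%N by lia.
    have -> : (u.+1 + c = (u + c).+1)%N by lia.
    have -> : (u.+1 + n.+1 + c = (u + n.+1 + c).+1)%N by lia.
    rewrite qpochS (Ipn u) (Ipn (u + c)) (Ipn n).
    have -> : q ^+ (u + n.+1 + c).+1 = q ^+ n.+1 * q ^+ (u + c).+1.
      by rewrite -exprD; congr (_ ^+ _); lia.
    rewrite -!exprnP; ring.
Qed.
End V.

Section Saal.
Variable F : numFieldType.
Variable q : F.
Hypothesis hq0 : q != 0.
Hypothesis hq1 : `|q| < 1.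
Notation I := (qpinv q).
Notation P := (qpoch q).
Let Ipr := Ipred hq0 hq1.
Let qD := qD hq0.
Local Unset Implicit Arguments.
Let qe (a b : int) (h : a = b) := @qeq F q a b h.
Let Ie (a b : int) (h : a = b) := @Ieq F q a b h.
Local Set Implicit Arguments.

Lemma qsub (a i : nat) : q ^ (a%:Z - i%:Z) = q ^+ a / q ^+ i.
Proof. by rewrite qD exprnP -exprnN exprnP. Qed.
Lemma qadd (a i : nat) : q ^ (a%:Z + i%:Z) = q ^+ a * q ^+ i.
Proof. by rewrite qD. Qed.

Variables l m c : nat.

Definition st (n i : nat) := q ^+ (i * i + c * i) * P (l + m + n + c - i) * I i%:Z
  * I (c%:Z + i%:Z) * I (l%:Z - i%:Z) * I (m%:Z - i%:Z) * I (n%:Z - i%:Z).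

Definition sG (n i : nat) := - q ^+ n.+1 * q ^+ (i * (i + c - 1)) * P (l + m + n + c + 1 - i)
  * I (i%:Z - 1) * I (c%:Z + i%:Z - 1) * I (l%:Z - i%:Z) * I (m%:Z - i%:Z) * I (n.+1%:Z - i%:Z).

Lemma st_rec (n i : nat) : (i <= n)%N ->
  (1 - q ^+ n.+1) * (1 - q ^+ (n.+1 + c)) * st n.+1 i
  - (1 - q ^+ (l + n.+1 + c)) * (1 - q ^+ (m + n.+1 + c)) * st n i
  = sG n i.+1 - sG n i.
Proof.
move=> hi; rewrite /st /sG.
set K := (l + m + n + c - i)%N.
have -> : (l + m + n.+1 + c - i = K.+1)%N by rewrite /K; lia.
have -> : (l + m + n + c + 1 - i = K.+1)%N by rewrite /K; lia.
have -> : (l + m + n + c + 1 - i.+1 = K)%N by rewrite /K; lia.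
rewrite qpochS.
rewrite (Ie (i.+1%:Z - 1) i%:Z); last by lia.
rewrite (Ie (c%:Z + i.+1%:Z - 1) (c%:Z + i%:Z)); last by lia.
rewrite (Ie (l%:Z - i.+1%:Z) (l%:Z - i%:Z - 1)); last by lia.
rewrite (Ie (m%:Z - i.+1%:Z) (m%:Z - i%:Z - 1)); last by lia.
rewrite (Ie (n.+1%:Z - i.+1%:Z) (n.+1%:Z - i%:Z - 1)); last by lia.
rewrite (Ie (n%:Z - i%:Z) (n.+1%:Z - i%:Z - 1)); last by lia.
rewrite !Ipr.
rewrite !qsub !qadd -?exprnP.
set E := q ^+ (i * (i + c - 1)).
have -> : q ^+ (i * i + c * i) = E * q ^+ i by rewrite /E -exprD; congr (_ ^+ _); nia.
have -> : q ^+ (i.+1 * (i.+1 + c - 1)) = E * q ^+ i * q ^+ i * q ^+ c.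
  by rewrite /E -!exprD; congr (_ ^+ _); nia.
have -> : q ^+ K.+1 = q ^+ l * q ^+ m * q ^+ n * q ^+ c * q / q ^+ i.
  apply: (mulIf (expf_neq0 i hq0)); rewrite mulfVK ?expf_neq0 // -!exprD -exprSr.
  congr (_ ^+ _); rewrite /K; lia.
rewrite !exprD !exprS.
have hx : q ^+ i != 0 by rewrite expf_neq0.
by field.
Qed.

Lemma st_last (n : nat) :
  (1 - q ^+ n.+1) * (1 - q ^+ (n.+1 + c)) * st n.+1 n.+1
  - (1 - q ^+ (l + n.+1 + c)) * (1 - q ^+ (m + n.+1 + c)) * st n n.+1
  = sG n n.+2 - sG n n.+1.
Proof.
rewrite /st /sG.
rewrite (@Ineg _ q (n%:Z - n.+1%:Z)); last by lia.
rewrite (Ie (n.+1%:Z - n.+1%:Z) 0) ?(I0 q); last by rewrite subrr.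
have -> : (l + m + n.+1 + c - n.+1 = l + m + c)%N by lia.
have -> : (l + m + n + c + 1 - n.+1 = l + m + c)%N by lia.
rewrite (Ie (n.+1%:Z - 1) n%:Z); last by lia.
rewrite (Ie (c%:Z + n.+1%:Z - 1) (c + n)%N%:Z); last by lia.
rewrite (Ie (c%:Z + n.+1%:Z) (c + n).+1%:Z); last by lia.
rewrite (Ipn hq0 hq1 n) (Ipn hq0 hq1 (c + n)).
have -> : q ^+ (n.+1 * n.+1 + c * n.+1) = q ^+ n.+1 * q ^+ (n.+1 * (n.+1 + c - 1)).
  by rewrite -exprD; congr (_ ^+ _); nia.
have -> : (n.+1 + c = (c + n).+1)%N by lia.
ring.
Qed.

Definition ssum n := \sum_(i < n.+1) st n i.

Lemma Saal (n : nat) : ssum n = P (l + m + c) * P (l + n + c) * P (m + n + c) * I l%:Z * I m%:Z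
  * I n%:Z * I (l + c)%N%:Z * I (m + c)%N%:Z * I (n + c)%N%:Z.
Proof.
elim: n => [|n IH].
- rewrite /ssum big_ord1 /st.
  have z : ((@ord0 0 : nat) = 0)%N by [].
  rewrite z !muln0 !addn0 !subn0 expr0 mul1r addr0 !subr0.
  rewrite ?addn0 ?add0n (I0 q).
  transitivity (P (l + m + c) * I c%:Z * I l%:Z * I m%:Z *
    ((I (l + c)%N%:Z * P (l + c)) * (I (m + c)%N%:Z * P (m + c)))).
    by rewrite !(IP hq1) !mulr1.
  ring.
- have ha : (1 - q ^+ n.+1) * (1 - q ^+ (n.+1 + c)) != 0.
    by rewrite mulf_neq0 // ?(osn hq1) // -addSn (osn hq1).
  apply: (mulfI ha).
  have e1 : ssum n = \sum_(i < n.+2) st n i.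
    rewrite [RHS]big_ord_recr [X in _ = _ + X](_ : _ = 0) ?addr0 //.
    rewrite /st (@Ineg _ q (n%:Z - (@ord_max n.+1 : nat)%:Z)) ?mulr0 //; rewrite /=; lia.
  have -> : (1 - q ^+ n.+1) * (1 - q ^+ (n.+1 + c)) * ssum n.+1 =
    (1 - q ^+ (l + n.+1 + c)) * (1 - q ^+ (m + n.+1 + c)) * ssum n.
    apply/eqP; rewrite -subr_eq0; apply/eqP.
    rewrite e1 /ssum !mulr_sumr -sumrB.
    rewrite (eq_bigr (fun i : 'I_n.+2 => sG n (i : nat).+1 - sG n i)); last first.
      move=> i _; case: (ltnP i n.+1) => hi.
      - by rewrite st_rec.
      - have -> : (i : nat) = n.+1 by have := ltn_ord i; lia.
        exact: st_last.
    rewrite -(big_mkord xpredT (fun i => sG n i.+1 - sG n i)) telescope_sumr //.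
    rewrite /sG (@Ineg _ q (n.+1%:Z - n.+2%:Z)) ?mulr0 ?mul0r ?subrr //; last by lia.
  rewrite IH (Ipn hq0 hq1 n) (Ipn hq0 hq1 (n + c)).
  have -> : (l + n.+1 + c = (l + n + c).+1)%N by lia.
  have -> : (m + n.+1 + c = (m + n + c).+1)%N by lia.
  have -> : (n.+1 + c = (n + c).+1)%N by lia.
  rewrite !qpochS; ring.
Qed.


End Saal.

Lemma sum_shift (R : zmodType) (K s : nat) (g : nat -> R) : (s <= K)%N ->
  (forall i, (i < s)%N -> g i = 0) -> \sum_(i < K) g i = \sum_(t < K - s) g (s + t)%N.
Proof.
move=> hs hg.
rewrite -(big_mkord xpredT g) (@big_cat_nat _ _ _ s) //=.
rewrite big1_seq ?add0r; last by move=> i /andP [_]; rewrite mem_iota => /andP [_ h]; apply: hg; lia.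
rewrite -{1}[s]add0n big_addn big_mkord; apply: eq_bigr => i _; by rewrite addnC.
Qed.

Section Bailey.
Variable F : numFieldType.
Variable q : F.
Hypothesis hq0 : q != 0.
Hypothesis hq1 : `|q| < 1.
Notation I := (qpinv q).
Notation P := (qpoch q).
Let Ipr := Ipred hq0 hq1.
Let qD := qD hq0.
Local Unset Implicit Arguments.
Let qe (a b : int) (h : a = b) := @qeq F q a b h.
Let Ie (a b : int) (h : a = b) := @Ieq F q a b h.
Local Set Implicit Arguments.

Variable e : nat.
Hypothesis he : (e <= 1)%N.

Definition D (x k : int) := I (x - k) * I (x + k + e%:Z).

Lemma Dsym x k : D x k = D x (- k - e%:Z).
Proof. rewrite /D mulrC; congr (I _ * I _); lia. Qed.

Lemma Dzero_lo (x : int) (kk : nat) : x < kk%:Z -> D x kk%:Z = 0.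
Proof. by move=> h; rewrite /D (@Ineg _ q (x - kk%:Z)) ?mul0r //; lia. Qed.

Lemma Vb_pos (u n kk : nat) :
  \sum_(i < u.+1) q ^ ((n%:Z - i%:Z) * (u%:Z - i%:Z)) * I (u%:Z - i%:Z) * I (n%:Z - i%:Z) * D i%:Z kk%:Z
  = D u%:Z kk%:Z * D n%:Z kk%:Z * P (u + n + e).
Proof.
case: (ltnP u kk) => hu.
  rewrite [D u%:Z _]Dzero_lo ?mul0r; last by lia.
  rewrite big1 // => i _; rewrite Dzero_lo ?mulr0 //; have := ltn_ord i; lia.
case: (ltnP n kk) => hn.
  rewrite [D n%:Z _]Dzero_lo ?mulr0 ?mul0r; last by lia.
  rewrite big1 // => i _.
  case: (ltnP i kk) => hi; first by rewrite Dzero_lo ?mulr0 //; lia.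
  by rewrite (@Ineg _ q (n%:Z - i%:Z)) ?mulr0 ?mul0r //; lia.
pose g (i : nat) := q ^ ((n%:Z - i%:Z) * (u%:Z - i%:Z)) * I (u%:Z - i%:Z) * I (n%:Z - i%:Z) * D i%:Z kk%:Z.
change (\sum_(i < u.+1) g i = D u%:Z kk%:Z * D n%:Z kk%:Z * P (u + n + e)).
rewrite (@sum_shift _ u.+1 kk g); [| lia |]; last first.
  by move=> i hi; rewrite /g Dzero_lo ?mulr0 //; lia.
rewrite /g.
have -> : (u.+1 - kk = (u - kk).+1)%N by lia.
have hu' : ((u - kk)%N%:Z = u%:Z - kk%:Z) by lia.
have hn' : ((n - kk)%N%:Z = n%:Z - kk%:Z) by lia.
transitivity (vsum q (u - kk) (n - kk)%N%:Z (kk + kk + e)%N%:Z).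
  rewrite /vsum; apply: eq_bigr => i _; rewrite /vt /D !mulrA.
  congr (_ * _ * _ * _ * _).
  - by apply: qe; rewrite hu' hn' PoszD; ring.
  - by apply: Ie; lia.
  - by apply: Ie; lia.
  - by apply: Ie; lia.
  - by apply: Ie; lia.
rewrite Vthm // /D.
rewrite (Ie (u - kk)%N%:Z (u%:Z - kk%:Z)) //.
rewrite (Ie (u - kk + (kk + kk + e))%N%:Z (u%:Z + kk%:Z + e%:Z)); last by lia.
rewrite (Ie (n - kk)%N%:Z (n%:Z - kk%:Z)) //.
rewrite (Ie (n - kk + (kk + kk + e))%N%:Z (n%:Z + kk%:Z + e%:Z)); last by lia.
have -> : (u - kk + (n - kk) + (kk + kk + e) = u + n + e)%N by lia.
ring.
Qed.

Lemma Dpos (k : int) : 0 <= k -> exists kk : nat, k = kk%:Z.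
Proof. by move=> h; exists (absz k); lia. Qed.

Lemma Vb (u n : nat) (k : int) :
  \sum_(i < u.+1) q ^ ((n%:Z - i%:Z) * (u%:Z - i%:Z)) * I (u%:Z - i%:Z) * I (n%:Z - i%:Z) * D i%:Z k
  = D u%:Z k * D n%:Z k * P (u + n + e).
Proof.
case: (lerP 0 k) => hk.
  by have [kk ->] := Dpos hk; apply: Vb_pos.
have [kk hkk] : exists kk : nat, - k - e%:Z = kk%:Z by apply: Dpos; lia.
under eq_bigr do rewrite (Dsym _ k) hkk.
by rewrite (Dsym u%:Z k) (Dsym n%:Z k) hkk Vb_pos.
Qed.

Lemma Ab (u j N : nat) : (2 * u + e < N)%N ->
  P u * zs N (fun k => W q k * D u%:Z k * D j%:Z k) = q ^+ (j * u) * I j%:Z * I (u + j + e)%N%:Z.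
Proof.
move=> hN.
pose c (i : nat) := q ^ ((j%:Z - i%:Z) * (u%:Z - i%:Z)) * I (u%:Z - i%:Z) * I (j%:Z - i%:Z).
have hV : forall k, D u%:Z k * D j%:Z k = I (u + j + e)%N%:Z * \sum_(i < u.+1) c i * D i%:Z k.
  move=> k; rewrite /c Vb.
  transitivity (D u%:Z k * D j%:Z k * (I (u + j + e)%N%:Z * P (u + j + e))); last by ring.
  by rewrite (IP hq1) mulr1.
have hU : forall i : nat, (i < u.+1)%N -> zs N (fun k => W q k * D i%:Z k) = (i == 0)%:R.
  move=> i hi; rewrite -(@Ulem _ q hq0 hq1 i e N he); last by lia.
  apply: eq_bigr => k _; rewrite /T /D mulrA; congr (_ * I _ * I _); lia.
transitivity (P u * (I (u + j + e)%N%:Z * \sum_(i < u.+1) c i * zs N (fun k => W q k * D i%:Z k))).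
  congr (_ * _); rewrite /zs mulr_sumr.
  under [RHS]eq_bigr do rewrite mulr_sumr mulr_sumr.
  rewrite [RHS]exchange_big; apply: eq_bigr => k _.
  rewrite -mulrA hV mulr_sumr mulr_sumr; apply: eq_bigr => i _; ring.
rewrite big_ord_recl big1 ?addr0; last first.
  move=> i _; rewrite hU; last exact: ltn_ord.
  by rewrite /= mulr0.
rewrite hU // mulr1 /c.
have -> : ((j%:Z - (@ord0 u : nat)%:Z) * (u%:Z - (@ord0 u : nat)%:Z) = (j * u)%N%:Z)%R by rewrite /=; lia.
rewrite (Ie (u%:Z - (@ord0 u : nat)%:Z) u%:Z); last by rewrite /=; lia.
rewrite (Ie (j%:Z - (@ord0 u : nat)%:Z) j%:Z); last by rewrite /=; lia.
rewrite -exprnP.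
transitivity (q ^+ (j * u) * I j%:Z * I (u + j + e)%N%:Z * (I u%:Z * P u)); first ring.
by rewrite IP // mulr1.
Qed.

Variables l m n : nat.

Definition bt (j : nat) := q ^+ (j * j + e * j) * P (l + m + n + e - j)
  * I (l%:Z - j%:Z) * I (m%:Z - j%:Z) * I (n%:Z - j%:Z).

Lemma Bb_pos (kk : nat) : \sum_(j < n.+1) bt j * D j%:Z kk%:Z =
  q ^+ (kk * (kk + e)) * P (l + m + e) * P (l + n + e) * P (m + n + e)
  * D l%:Z kk%:Z * D m%:Z kk%:Z * D n%:Z kk%:Z.
Proof.
have Z : (kk > l)%N || (kk > m)%N || (kk > n)%N -> \sum_(j < n.+1) bt j * D j%:Z kk%:Z = 0.
  move=> h; apply: big1 => j _.
  case: (ltnP j kk) => hj; first by rewrite Dzero_lo ?mulr0 //; lia.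
  rewrite /bt; case/orP: h => [/orP [] | ] h.
  - by rewrite (@Ineg _ q (l%:Z - j%:Z)) ?mulr0 ?mul0r //; lia.
  - by rewrite (@Ineg _ q (m%:Z - j%:Z)) ?mulr0 ?mul0r //; lia.
  - by have := ltn_ord j; lia.
case: (ltnP n kk) => h3.
  by rewrite Z ?[D n%:Z _]Dzero_lo ?mulr0 //; lia.
case: (ltnP m kk) => h2.
  by rewrite Z ?[D m%:Z _]Dzero_lo ?mulr0 ?mul0r //; lia.
case: (ltnP l kk) => h1.
  by rewrite Z ?[D l%:Z _]Dzero_lo ?mulr0 ?mul0r //; lia.
pose g (j : nat) := bt j * D j%:Z kk%:Z.
change (\sum_(j < n.+1) g j = q ^+ (kk * (kk + e)) * P (l + m + e) * P (l + n + e) * P (m + n + e)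
  * D l%:Z kk%:Z * D m%:Z kk%:Z * D n%:Z kk%:Z).
rewrite (@sum_shift _ n.+1 kk g); [| lia |]; last first.
  by move=> i hi; rewrite /g Dzero_lo ?mulr0 //; lia.
have -> : (n.+1 - kk = (n - kk).+1)%N by lia.
transitivity (q ^+ (kk * (kk + e)) * ssum q (l - kk) (m - kk) (kk + kk + e) (n - kk)).
  rewrite /ssum mulr_sumr; apply: eq_bigr => t _; rewrite /g /bt /st /D !mulrA.
  have -> : ((kk + t) * (kk + t) + e * (kk + t) = kk * (kk + e) + (t * t + (kk + kk + e) * t))%N by nia.
  rewrite exprD -!mulrA; congr (_ * _); rewrite !mulrA.
  have -> : (l + m + n + e - (kk + t) = l - kk + (m - kk) + (n - kk) + (kk + kk + e) - t)%N by lia.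
  rewrite (Ie (l%:Z - (kk + t)%N%:Z) ((l - kk)%N%:Z - t%:Z)); last by lia.
  rewrite (Ie (m%:Z - (kk + t)%N%:Z) ((m - kk)%N%:Z - t%:Z)); last by lia.
  rewrite (Ie (n%:Z - (kk + t)%N%:Z) ((n - kk)%N%:Z - t%:Z)); last by lia.
  rewrite (Ie ((kk + t)%N%:Z - kk%:Z) t%:Z); last by lia.
  rewrite (Ie ((kk + t)%N%:Z + kk%:Z + e%:Z) ((kk + kk + e)%N%:Z + t%:Z)); last by lia.
  ring.
rewrite Saal // /D.
have -> : (l - kk + (m - kk) + (kk + kk + e) = l + m + e)%N by lia.
have -> : (l - kk + (n - kk) + (kk + kk + e) = l + n + e)%N by lia.
have -> : (m - kk + (n - kk) + (kk + kk + e) = m + n + e)%N by lia.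
rewrite (Ie (l - kk)%N%:Z (l%:Z - kk%:Z)); last by lia.
rewrite (Ie (m - kk)%N%:Z (m%:Z - kk%:Z)); last by lia.
rewrite (Ie (n - kk)%N%:Z (n%:Z - kk%:Z)); last by lia.
rewrite (Ie (l - kk + (kk + kk + e))%N%:Z (l%:Z + kk%:Z + e%:Z)); last by lia.
rewrite (Ie (m - kk + (kk + kk + e))%N%:Z (m%:Z + kk%:Z + e%:Z)); last by lia.
rewrite (Ie (n - kk + (kk + kk + e))%N%:Z (n%:Z + kk%:Z + e%:Z)); last by lia.
ring.
Qed.

Lemma Bb (k : int) : \sum_(j < n.+1) bt j * D j%:Z k =
  q ^ (k * (k + e%:Z)) * P (l + m + e) * P (l + n + e) * P (m + n + e)
  * D l%:Z k * D m%:Z k * D n%:Z k.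
Proof.
case: (lerP 0 k) => hk.
  have [kk ->] := Dpos hk; rewrite Bb_pos.
  by rewrite -PoszD -PoszM.
have [kk hkk] : exists kk : nat, - k - e%:Z = kk%:Z by apply: Dpos; lia.
under eq_bigr do rewrite (Dsym _ k) hkk.
rewrite (Dsym l%:Z k) (Dsym m%:Z k) (Dsym n%:Z k) hkk Bb_pos.
have -> : (k * (k + e%:Z) = (kk * (kk + e))%N%:Z)%R.
  rewrite PoszM PoszD -hkk; ring.
by [].
Qed.

End Bailey.

Section Main.
Variable F : numFieldType.
Variable q : F.
Hypothesis hq0 : q != 0.
Hypothesis hq1 : `|q| < 1.
Notation I := (qpinv q).
Notation P := (qpoch q).
Local Unset Implicit Arguments.
Let qe (a b : int) (h : a = b) := @qeq F q a b h.
Let Ie (a b : int) (h : a = b) := @Ieq F q a b h.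
Local Set Implicit Arguments.

Variable e : nat.
Hypothesis he : (e <= 1)%N.
Variables l m n u : nat.

Lemma Main N : (2 * u + e < N)%N ->
  \sum_(j < n.+1) bt q e l m n j * (q ^+ (j * u) * I j%:Z * I (u + j + e)%N%:Z)
  = zs N (fun k => P u * (W q k * D q e u%:Z k * (q ^ (k * (k + e%:Z)) * P (l + m + e)
      * P (l + n + e) * P (m + n + e) * D q e l%:Z k * D q e m%:Z k * D q e n%:Z k))).
Proof.
move=> hN.
under eq_bigr => j _ do rewrite -(Ab hq0 hq1 he j hN).
transitivity (P u * zs N (fun k => W q k * D q e u%:Z k *
   \sum_(j < n.+1) bt q e l m n j * D q e j%:Z k)).
  transitivity (P u * \sum_(j < n.+1) zs N (fun k => bt q e l m n j * (W q k * D q e u%:Z k * D q e j%:Z k))).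
    rewrite mulr_sumr; apply: eq_bigr => j _.
    by rewrite mulrCA /zs mulr_sumr.
  congr (P u * _); rewrite /zs exchange_big; apply: eq_bigr => k _.
  rewrite mulr_sumr; apply: eq_bigr => j _; ring.
rewrite /zs mulr_sumr; apply: eq_bigr => k _.
by rewrite (Bb hq0 hq1 he l m n).
Qed.
End Main.

Section Final.
Variable F : numFieldType.
Variable q : F.
Hypothesis hq0 : q != 0.
Hypothesis hq1 : `|q| < 1.
Notation I := (qpinv q).
Notation P := (qpoch q).
Local Unset Implicit Arguments.
Let qe (a b : int) (h : a = b) := @qeq F q a b h.
Let Ie (a b : int) (h : a = b) := @Ieq F q a b h.
Local Set Implicit Arguments.
Let qD := qD hq0.

Lemma Wq0 (k : int) : W q k * q ^ (k * (k + 0%:Z)) = (-1) ^ k * q ^ ((3 * k ^+ 2 - k) %/ 2)%Z.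
Proof.
rewrite /W -mulrA -qD.
have -> : (3 * k ^+ 2 - k = (k * (k + 0%:Z)) * 2 + k * (k - 1))%R by ring.
by rewrite divzMDl // addrC.
Qed.

Lemma Wq1 (k : int) : W q k * q ^ (k * (k + 1%:Z)) = (-1) ^ k * q ^ ((3 * k ^+ 2 + k) %/ 2)%Z.
Proof.
rewrite /W -mulrA -qD.
have -> : (3 * k ^+ 2 + k = (k * (k + 1%:Z)) * 2 + k * (k - 1))%R by ring.
by rewrite divzMDl // addrC.
Qed.

Lemma Dnz e (x k : int) : D q e x k != 0 -> (- x - e%:Z <= k) && (k <= x).
Proof.
rewrite /D => h.
have h1 : I (x - k) != 0 by apply: contraNneq h => ->; rewrite mul0r.
have h2 : I (x + k + e%:Z) != 0 by apply: contraNneq h => ->; rewrite mulr0.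
have := Inz h1; have := Inz h2; lia.
Qed.

Variables l m n u : nat.

Lemma part0 :
  \sum_(k < n.+1)
     q ^+ (k ^ 2 + u * k)%N * qpoch q (l + m + n - k)%N
       * qpinv q k%:Z * qpinv q (l%:Z - k%:Z) * qpinv q (m%:Z - k%:Z)
       * qpinv q (n%:Z - k%:Z) * qpinv q (u%:Z + k%:Z)
   =
   \sum_(j < (2 * n).+1)
     (let k : int := j%:Z - n%:Z in
      (-1) ^ k * q ^ ((3 * k ^+ 2 - k) %/ 2)%Z
        * qpoch q (l + m) * qpoch q (m + n) * qpoch q (l + n) * qpoch q u
        * qpinv q (l%:Z - k) * qpinv q (m%:Z - k) * qpinv q (n%:Z - k)
        * qpinv q (u%:Z - k) * qpinv q (l%:Z + k) * qpinv q (m%:Z + k)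
        * qpinv q (n%:Z + k) * qpinv q (u%:Z + k)).
Proof.
have he : (0 <= 1)%N by [].
transitivity (\sum_(j < n.+1) bt q 0 l m n j * (q ^+ (j * u) * I j%:Z * I (u + j + 0)%N%:Z)).
  apply: eq_bigr => j _; rewrite /bt.
  have -> : ((j : nat) ^ 2 + u * j = (j * j + 0 * j) + j * u)%N by rewrite mul0n addn0; ring.
  rewrite exprD !addn0 (Ie (u%:Z + j%:Z) (u + j)%N%:Z) //; ring.
rewrite (@Main _ q hq0 hq1 0 he l m n u (n + (2 * u + 2))); last by lia.
rewrite zs_widen; last first.
  move=> k H; have : D q 0 n%:Z k != 0 by apply: contraNneq H => ->; rewrite !mulr0.
  by move/Dnz; lia.
rewrite /zs; apply: eq_bigr => j _; cbv beta zeta.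
set k := (j%:Z - n%:Z).
rewrite /D !addr0 !addn0.
transitivity (P (l + m) * P (m + n) * P (l + n) * P u *
  (W q k * q ^ (k * (k + 0%:Z))) * I (l%:Z - k) * I (m%:Z - k) * I (n%:Z - k)
        * I (u%:Z - k) * I (l%:Z + k) * I (m%:Z + k) * I (n%:Z + k) * I (u%:Z + k)).
  rewrite addr0; ring.
rewrite Wq0; ring.
Qed.

Lemma part1 :
  \sum_(k < n.+1)
     q ^+ (k ^ 2 + u.+1 * k)%N * qpoch q (l + m + n - k).+1
       * qpinv q k%:Z * qpinv q (l%:Z - k%:Z) * qpinv q (m%:Z - k%:Z)
       * qpinv q (n%:Z - k%:Z) * qpinv q (u%:Z + k%:Z + 1)
   =
   \sum_(j < (2 * n).+2)
     (let k : int := j%:Z - (n%:Z + 1) in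
      (-1) ^ k * q ^ ((3 * k ^+ 2 + k) %/ 2)%Z
        * qpoch q (l + m).+1 * qpoch q (m + n).+1 * qpoch q (l + n).+1
        * qpoch q u
        * qpinv q (l%:Z - k) * qpinv q (m%:Z - k) * qpinv q (n%:Z - k)
        * qpinv q (u%:Z - k) * qpinv q (l%:Z + k + 1) * qpinv q (m%:Z + k + 1)
        * qpinv q (n%:Z + k + 1) * qpinv q (u%:Z + k + 1)).
Proof.
have he : (1 <= 1)%N by [].
transitivity (\sum_(j < n.+1) bt q 1 l m n j * (q ^+ (j * u) * I j%:Z * I (u + j + 1)%N%:Z)).
  apply: eq_bigr => j _; rewrite /bt.
  have -> : ((j : nat) ^ 2 + u.+1 * j = (j * j + 1 * j) + j * u)%N by ring.
  have -> : (l + m + n + 1 - j = (l + m + n - j).+1)%N by have := ltn_ord j; lia.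
  rewrite exprD (Ie (u%:Z + j%:Z + 1) (u + j + 1)%N%:Z) //; ring.
rewrite (@Main _ q hq0 hq1 1 he l m n u (n.+1 + (2 * u + 2))); last by lia.
rewrite zs_widen; last first.
  move=> k H; have : D q 1 n%:Z k != 0 by apply: contraNneq H => ->; rewrite !mulr0.
  by move/Dnz; lia.
rewrite /zs.
have -> : (2 * n.+1).+1 = ((2 * n).+2).+1 by lia.
rewrite big_ord_recr /=.
rewrite [X in _ + X](_ : _ = 0) ?addr0; last first.
  by rewrite /D (@Ineg _ q (n%:Z - ((2 * n).+2%:Z - n.+1%:Z))) ?mul0r ?mulr0 //; lia.
apply: eq_bigr => j _.
have -> : (j%:Z - (n%:Z + 1) = j%:Z - n.+1%:Z)%R by lia.
set k := (j%:Z - n.+1%:Z).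
rewrite /D !addn1.
rewrite (Ie (l%:Z + k + 1%:Z) (l%:Z + k + 1)) // (Ie (m%:Z + k + 1%:Z) (m%:Z + k + 1)) //.
rewrite (Ie (n%:Z + k + 1%:Z) (n%:Z + k + 1)) // (Ie (u%:Z + k + 1%:Z) (u%:Z + k + 1)) //.
transitivity (P (l + m).+1 * P (m + n).+1 * P (l + n).+1 * P u *
  (W q k * q ^ (k * (k + 1%:Z))) * I (l%:Z - k) * I (m%:Z - k) * I (n%:Z - k)
        * I (u%:Z - k) * I (l%:Z + k + 1) * I (m%:Z + k + 1) * I (n%:Z + k + 1) * I (u%:Z + k + 1)).
  ring.
rewrite Wq1; ring.
Qed.
End Final.

Unset Implicit Arguments.
Theorem corollary5p5 (R : realType) (q : R[i]) (l m n u : nat)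
  (hq0 : 0 < `|q|) (hq1 : `|q| < 1) :
  (\sum_(k < n.+1)
     q ^+ (k ^ 2 + u * k)%N * qpoch q (l + m + n - k)%N
       * qpinv q k%:Z * qpinv q (l%:Z - k%:Z) * qpinv q (m%:Z - k%:Z)
       * qpinv q (n%:Z - k%:Z) * qpinv q (u%:Z + k%:Z)
   =
   \sum_(j < (2 * n).+1)
     (let k : int := j%:Z - n%:Z in
      (-1) ^ k * q ^ ((3 * k ^+ 2 - k) %/ 2)%Z
        * qpoch q (l + m) * qpoch q (m + n) * qpoch q (l + n) * qpoch q u
        * qpinv q (l%:Z - k) * qpinv q (m%:Z - k) * qpinv q (n%:Z - k)
        * qpinv q (u%:Z - k) * qpinv q (l%:Z + k) * qpinv q (m%:Z + k)
        * qpinv q (n%:Z + k) * qpinv q (u%:Z + k)))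
  /\
  (\sum_(k < n.+1)
     q ^+ (k ^ 2 + u.+1 * k)%N * qpoch q (l + m + n - k).+1
       * qpinv q k%:Z * qpinv q (l%:Z - k%:Z) * qpinv q (m%:Z - k%:Z)
       * qpinv q (n%:Z - k%:Z) * qpinv q (u%:Z + k%:Z + 1)
   =
   \sum_(j < (2 * n).+2)
     (let k : int := j%:Z - (n%:Z + 1) in
      (-1) ^ k * q ^ ((3 * k ^+ 2 + k) %/ 2)%Z
        * qpoch q (l + m).+1 * qpoch q (m + n).+1 * qpoch q (l + n).+1
        * qpoch q u
        * qpinv q (l%:Z - k) * qpinv q (m%:Z - k) * qpinv q (n%:Z - k)
        * qpinv q (u%:Z - k) * qpinv q (l%:Z + k + 1) * qpinv q (m%:Z + k + 1)
        * qpinv q (n%:Z + k + 1) * qpinv q (u%:Z + k + 1))).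
Proof.
have hq0' : q != 0 by rewrite -normr_gt0.
split.
- exact: (part0 hq0' hq1 l m n u).
- exact: (part1 hq0' hq1 l m n u).
Qed.
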